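(* Let $(m_i)_{i\ge0}$ and $(M_i)_{i\ge0}$ be sequences of positive integers such that $\rho_{m_i-1}\cdots\rho_1\cdot p^{M_i}\le1$ for all $i\ge0$ (the empty product being $1$). Suppose that for some $\lambda_0\in\Lambda$ there is $z_0\in K(Q_{\lambda_0},B)$ whose itinerary for $Q_{\lambda_0}$ is $$\underbrace{0\ldots0}_{m_0}\underbrace{1\ldots1}_{M_0}\underbrace{0\ldots0}_{m_1}\underbrace{1\ldots1}_{M_1}\ldots\underbrace{0\ldots0}_{m_i}\underbrace{1\ldots1}_{M_i}\ldots.$$ Then the closed ball $D=\{z:|z-z_0|\le S\}$ is contained in $K(Q_{\lambda_0},B)$. If moreover $\lim_{i\to\infty}M_i=\infty$, then $D$ is a wandering disc for $Q_{\lambda_0}$ contained in $K(Q_{\lambda_0},B)$ which is not attracted to an attracting cycle.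
   Context: Let $p$ be a prime, $\mathbb C_p$ with $p$-adic absolute value, $|p|=1/p$. $\Lambda=\{\lambda\in\mathbb C_p:|\lambda-1|<1\}$, $P_\lambda(z)=\frac{\lambda}{p}z^p+\left(1-\frac{\lambda}{p}\right)z^{p+1}$, $\rho=p^{-1/(p-1)}$; $S>0$ is defined by $pS^{p-1}=\rho$; $\rho_0=1$ and $p\rho_n^p=\rho_{n-1}$ for $n\ge1$. Fix $\hat r\in|\mathbb C_p^*|$, $\hat r>1$, $B=\{z:|z|\le\hat r\}$; $\mathcal H(B)$ is the ring of power series $\sum a_iz^i$ convergent on $B$ with norm $\|f\|_B=\sup_i|a_i|\hat r^{\,i}$. Fix $Q\in\mathcal H(B)$ with $\|Q\|_B<\rho$, $Q^*_\lambda=P_\lambda+Q$, and let $h(\lambda)$ be the unique fixed point of $Q^*_\lambda$ in $\{z:|z-1|\le|Q(1)|/p\}$. Define $Q_\lambda(z)=P_\lambda(z+h(\lambda)-1)+Q(z+h(\lambda)-1)+1-h(\lambda)$ for $z\in B$, and $K(Q_\lambda,B)=\{z\in B:Q_\lambda^n(z)\in B\ \forall n\ge0\}$. With $B_0=\{z:|z|<1\}$, $B_1=\{z:|z-1|<1\}$ (one has $K(Q_\lambda,B)\subset B_0\sqcup B_1$), the itinerary of $z\in K(Q_\lambda,B)$ is $\theta_0\theta_1\ldots$ with $Q_\lambda^n(z)\in B_{\theta_n}$. A wandering disc is a ball $D$ with $Q^n_\lambda(D)\cap Q^m_\lambda(D)\ne\emptyset$ only if $n=m$; ''not attracted to an attracting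 cycle'' means no point of $D$ lies in an open ball contained in the basin of an attracting periodic orbit. *)

(* Defs.v *)
From mathcomp Require Import all_boot all_order all_algebra.
From mathcomp Require Import all_classical all_reals all_analysis.
Set Implicit Arguments. Unset Strict Implicit. Unset Printing Implicit Defensive.
Import Order.TTheory GRing.Theory Num.Theory.
Local Open Scope ring_scope.

(* (K, abs) is a model of C_p: an algebraically closed field with a real-valued
   non-archimedean absolute value, complete, with |p| = 1/p, in which the
   elements algebraic over Q are dense.  These properties characterize C_p
   (completion of an algebraic closure of Q_p) up to isometric isomorphism. *)

Definition cvgK (R : realType) (K : fieldType) (abs : K -> R)
    (u : nat -> K) (l : K) : Prop :=
  forall eps : R, 0 < eps -> exists N : nat, forall n, (N <= n)%N -> abs (u n - l) < eps.

Definition cauchyK (R : realType) (K : fieldType) (abs : K -> R) (u : nat -> K) : Prop :=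
  forall eps : R, 0 < eps -> exists N : nat,
    forall n m, (N <= n)%N -> (N <= m)%N -> abs (u n - u m) < eps.

Record is_Cp (p : nat) (R : realType) (K : closedFieldType) (abs : K -> R) : Prop := {
  Cp_abs_ge0 : forall x, 0 <= abs x;
  Cp_abs_eq0 : forall x, (abs x == 0) = (x == 0);
  Cp_absM : forall x y, abs (x * y) = abs x * abs y;
  Cp_ultra : forall x y, abs (x + y) <= Num.max (abs x) (abs y);
  Cp_absp : abs (p%:R) = (p%:R)^-1;
  Cp_complete : forall u, cauchyK abs u -> exists l, cvgK abs u l;
  Cp_dense : forall (x : K) (eps : R), 0 < eps ->
    exists (y : K) (q : {poly int}), q != 0 /\ root (map_poly intr q) y /\ abs (x - y) < eps
}.

Definition rho (R : realType) (p : nat) : R := powR (p%:R) (- (p.-1%:R)^-1).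
(* S > 0 with p S^(p-1) = rho, i.e. S = (rho/p)^(1/(p-1)) *)
Definition Sconst (R : realType) (p : nat) : R := powR (rho R p / p%:R) ((p.-1%:R)^-1).
(* rho_0 = 1, p rho_n^p = rho_(n-1), i.e. rho_n = (rho_(n-1)/p)^(1/p) *)
Fixpoint rho_seq (R : realType) (p : nat) (n : nat) : R :=
  match n with
  | 0 => 1
  | n'.+1 => powR (rho_seq R p n' / p%:R) ((p%:R)^-1)
  end.

Definition psum (K : fieldType) (a : nat -> K) (z : K) : nat -> K :=
  fun n => \sum_(i < n) a i * z ^+ i.

Definition Plam (K : fieldType) (p : nat) (lam z : K) : K :=
  lam / p%:R * z ^+ p + (1 - lam / p%:R) * z ^+ p.+1.

Definition Qlam (K : fieldType) (p : nat) (lam h : K) (Qf : K -> K) (z : K) : K :=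
  Plam p lam (z + h - 1) + Qf (z + h - 1) + 1 - h.

Definition filledK (R : realType) (K : fieldType) (abs : K -> R) (r : R)
    (f : K -> K) (z : K) : Prop :=
  forall n : nat, abs (iter n f z) <= r.

(* Itinerary 0^{m_0} 1^{M_0} 0^{m_1} 1^{M_1} ... ; s_i = start of i-th block pair *)
Definition block_start (m M : nat -> nat) (i : nat) : nat := \sum_(j < i) (m j + M j).

Definition has_block_itinerary (R : realType) (K : fieldType) (abs : K -> R)
    (f : K -> K) (m M : nat -> nat) (z : K) : Prop :=
  forall i : nat,
    (forall k, (k < m i)%N -> abs (iter (block_start m M i + k) f z) < 1) /\
    (forall k, (k < M i)%N -> abs (iter (block_start m M i + m i + k) f z - 1) < 1).

Definition wandering (K : fieldType) (f : K -> K) (D : K -> Prop) : Prop :=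
  forall n m : nat, (exists x y, D x /\ D y /\ iter n f x = iter m f y) -> n = m.

Definition has_deriv (R : realType) (K : fieldType) (abs : K -> R)
    (g : K -> K) (w d : K) : Prop :=
  forall eps : R, 0 < eps -> exists del : R, 0 < del /\
    forall x, 0 < abs (x - w) < del -> abs ((g x - g w) / (x - w) - d) < eps.

Definition attracting_cycle (R : realType) (K : fieldType) (abs : K -> R) (r : R)
    (f : K -> K) (w : K) (k : nat) : Prop :=
  (0 < k)%N /\ filledK abs r f w /\ iter k f w = w /\
  exists d, has_deriv abs (iter k f) w d /\ abs d < 1.

Definition basin (R : realType) (K : fieldType) (abs : K -> R) (r : R)
    (f : K -> K) (w : K) (k : nat) (z : K) : Prop :=
  filledK abs r f z /\
  exists j, (j < k)%N /\ cvgK abs (fun n => iter (n * k) f z) (iter j f w).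

Definition not_attracted (R : realType) (K : fieldType) (abs : K -> R) (r : R)
    (f : K -> K) (D : K -> Prop) : Prop :=
  ~ exists (w : K) (k : nat) (c : K) (s : R),
      attracting_cycle abs r f w k /\ 0 < s /\
      (forall x, abs (x - c) < s -> basin abs r f w k x) /\
      (exists z, D z /\ abs (z - c) < s).

(* Main.v *)
Require Import Defs.
From mathcomp Require Import all_boot all_order all_algebra.
From mathcomp Require Import all_classical all_reals all_analysis.
From mathcomp Require Import ring lra zify.
Import Order.TTheory GRing.Theory Num.Theory.
Local Open Scope ring_scope.
Set Implicit Arguments. Unset Strict Implicit. Unset Printing Implicit Defensive.


Lemma ab_ge0 p (R : realType) (K : closedFieldType) (abs : K -> R) (H : is_Cp p abs) x :
  0 <= abs x.
Proof. exact: Cp_abs_ge0 H x. Qed.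

Lemma ab_le p (R : realType) (K : closedFieldType) (abs : K -> R) (H : is_Cp p abs) x y B :
  abs x <= B -> abs y <= B -> abs (x + y) <= B.
Proof.
move=> hx hy; apply: le_trans (Cp_ultra H x y) _.
by rewrite ge_max hx hy.
Qed.

Lemma ab_lt p (R : realType) (K : closedFieldType) (abs : K -> R) (H : is_Cp p abs) x y B :
  abs x < B -> abs y < B -> abs (x + y) < B.
Proof.
move=> hx hy; apply: le_lt_trans (Cp_ultra H x y) _.
by rewrite gt_max hx hy.
Qed.

Lemma ab0 p (R : realType) (K : closedFieldType) (abs : K -> R) (H : is_Cp p abs) :
  abs 0 = 0.
Proof. by apply/eqP; rewrite (Cp_abs_eq0 H). Qed.

Lemma ab1 p (R : realType) (K : closedFieldType) (abs : K -> R) (H : is_Cp p abs) :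
  abs 1 = 1.
Proof.
have h := Cp_absM H 1 1; rewrite mulr1 in h.
have n0 : abs 1 != 0 by rewrite (Cp_abs_eq0 H) oner_eq0.
by apply: (mulfI n0); rewrite -h mulr1.
Qed.

Lemma abN p (R : realType) (K : closedFieldType) (abs : K -> R) (H : is_Cp p abs) x :
  abs (- x) = abs x.
Proof.
have h1 : abs (-1) = 1.
  have h := Cp_absM H (-1) (-1); rewrite mulrNN mulr1 (ab1 H) in h.
  have g := ab_ge0 H (-1).
  nra.
by rewrite -mulN1r (Cp_absM H) h1 mul1r.
Qed.

Lemma abB p (R : realType) (K : closedFieldType) (abs : K -> R) (H : is_Cp p abs) x y :
  abs (x - y) = abs (y - x).
Proof. by rewrite -(abN H) opprB. Qed.

Lemma abX p (R : realType) (K : closedFieldType) (abs : K -> R) (H : is_Cp p abs) x n :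
  abs (x ^+ n) = abs x ^+ n.
Proof.
elim: n => [|n IH]; first by rewrite !expr0 (ab1 H).
by rewrite !exprS (Cp_absM H) IH.
Qed.

Lemma ab_nat p (R : realType) (K : closedFieldType) (abs : K -> R) (H : is_Cp p abs) n :
  abs (n%:R : K) <= 1.
Proof.
elim: n => [|n IH]; first by rewrite (ab0 H).
by rewrite -addn1 natrD; apply: (ab_le H) => //; rewrite (ab1 H).
Qed.

Lemma ab_strict p (R : realType) (K : closedFieldType) (abs : K -> R) (H : is_Cp p abs) x y :
  abs y < abs x -> abs (x + y) = abs x.
Proof.
move=> hy; apply/eqP; rewrite eq_le; apply/andP; split.
  by apply: (ab_le H) => //; apply: ltW.
have e : x = (x + y) + - y by ring.
have := Cp_ultra H (x + y) (- y); rewrite -e (abN H).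
rewrite le_max => /orP [//|h]; by move: (le_lt_trans h hy); rewrite ltxx.
Qed.

Lemma ab_sum p (R : realType) (K : closedFieldType) (abs : K -> R) (H : is_Cp p abs)
  n (F : nat -> K) B : 0 <= B -> (forall i, (i < n)%N -> abs (F i) <= B) ->
  abs (\sum_(i < n) F i) <= B.
Proof.
move=> B0; elim: n => [|n IH] hF; first by rewrite big_ord0 (ab0 H).
rewrite big_ord_recr /=; apply: (ab_le H).
  by apply: IH => i hi; apply: hF; rewrite ltnS ltnW.
exact: hF.
Qed.

Lemma ab_limit p (R : realType) (K : closedFieldType) (abs : K -> R) (H : is_Cp p abs)
  (s : nat -> K) L B : cvgK abs s L -> (forall n, abs (s n) <= B) -> abs L <= B.
Proof.
move=> hc hb; have B0 : 0 <= B by apply: le_trans (hb 0%N); exact: ab_ge0 H _.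
rewrite leNgt; apply/negP => hL.
have e0 : 0 < (abs L - B) by rewrite subr_gt0.
have [N hN] := hc _ e0.
have h1 := hN N (leqnn N).
have e : L = s N + - (s N - L) by ring.
have := Cp_ultra H (s N) (- (s N - L)); rewrite -e (abN H) le_max => /orP [h|h].
  by move: (le_trans h (hb N)); rewrite leNgt hL.
have := le_lt_trans h h1; lra.
Qed.

Lemma powR_root (R : realType) (a : R) n : 0 <= a -> (0 < n)%N ->
  (a `^ (n%:R^-1)) ^+ n = a.
Proof.
move=> a0 n0; rewrite -powR_mulrn ?powR_ge0 // -powRrM mulVf ?powRr1 //.
by rewrite pnatr_eq0 -lt0n.
Qed.

Lemma rho_pow (R : realType) p : (1 < p)%N -> rho R p ^+ p.-1 = (p%:R)^-1.
Proof.
move=> p1; rewrite /rho powRN exprVn powR_root //; last by rewrite -ltnS prednK // ltnW.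
Qed.

Lemma rho_gt0 (R : realType) p : (1 < p)%N -> 0 < rho R p.
Proof. by move=> p1; rewrite /rho powR_gt0 // ltr0n ltnW. Qed.

Lemma rho_lt1 (R : realType) p : (1 < p)%N -> rho R p < 1.
Proof.
move=> p1; have h := rho_pow R p1; have g := rho_gt0 R p1.
rewrite ltNge; apply/negP => h1.
have : 1 <= rho R p ^+ p.-1 by rewrite exprn_ege1.
rewrite h invf_ge1 ?ltr0n ?ler1n; last by rewrite ltnW.
rewrite leNgt (ltr1n R) p1 //.
Qed.

Lemma rho_gep (R : realType) p : (1 < p)%N -> (p%:R)^-1 <= rho R p.
Proof.
move=> p1; rewrite -(rho_pow R p1).
have := rho_lt1 R p1; have := rho_gt0 R p1 => h0 h1.
rewrite -[leRHS]expr1; apply: ler_wiXn2l => //; first by rewrite (ltW h0).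
idtac.
  exact: ltW. by rewrite -subn1 subn_gt0.
Qed.

Lemma rho_powp (R : realType) p : (1 < p)%N -> rho R p ^+ p = rho R p / p%:R.
Proof.
move=> p1; set r := rho R p; have e : p = p.-1.+1 by rewrite prednK // ltnW.
rewrite [in LHS]e exprS /r rho_pow //.
Qed.

Lemma S_pow (R : realType) p : (1 < p)%N -> Sconst R p ^+ p.-1 = rho R p / p%:R.
Proof.
move=> p1; rewrite /Sconst powR_root //; last by rewrite -ltnS prednK // ltnW.
by rewrite divr_ge0 // ltW // rho_gt0.
Qed.

Lemma S_gt0 (R : realType) p : (1 < p)%N -> 0 < Sconst R p.
Proof.
move=> p1; rewrite /Sconst powR_gt0 // divr_gt0 ?rho_gt0 // ltr0n ltnW //.
Qed.

Lemma S_lt1 (R : realType) p : (1 < p)%N -> Sconst R p < 1.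
Proof.
move=> p1; have h := S_pow R p1; have g := S_gt0 R p1.
rewrite ltNge; apply/negP => h1.
have : 1 <= Sconst R p ^+ p.-1 by rewrite exprn_ege1.
rewrite h; have r1 := rho_lt1 R p1; have r0 := rho_gt0 R p1.
have P1 : (1 : R) <= p%:R by rewrite ler1n ltnW.
rewrite ler_pdivlMr ?mul1r; last by rewrite ltr0n ltnW.
lra.
Qed.

Lemma rhos_pow (R : realType) p j : (1 < p)%N -> 0 <= rho_seq R p j ->
  rho_seq R p j.+1 ^+ p = rho_seq R p j / p%:R.
Proof.
move=> p1 h; rewrite [rho_seq R p j.+1]/rho_seq -/(rho_seq R p j).
rewrite powR_root //; last exact: ltnW.
by rewrite divr_ge0.
Qed.

Lemma rhos_prop (R : realType) p j : (1 < p)%N ->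
  rho R p < rho_seq R p j /\ rho_seq R p j <= 1.
Proof.
move=> p1; elim: j => [|j [IH1 IH2]]; first by rewrite /= rho_lt1.
have r0 := rho_gt0 R p1.
have P0 : (0 : R) < p%:R by rewrite ltr0n ltnW.
have e := rhos_pow p1 (ltW (lt_trans r0 IH1)).
have g0 : 0 <= rho_seq R p j.+1 by exact: powR_ge0.
have nn : forall x : R, 0 <= x -> x \in Num.nneg by move=> x hx; rewrite nnegrE.
split.
  rewrite ltNge; apply/negP => h.
  have := lerXn2r p (nn _ g0) (nn _ (ltW r0)) h; rewrite /= e rho_powp //.
  by rewrite ler_pM2r ?invr_gt0 // leNgt IH1.
rewrite leNgt; apply/negP => h.
have := ltr_pXn2r (ltnW p1) (nn _ ler01) (nn _ g0); rewrite h /= e expr1n => /esym.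
rewrite ltr_pdivlMr // mul1r => h2.
have : (1 : R) <= p%:R by rewrite ler1n ltnW.
move: h2 IH2; lra.
Qed.
Lemma pow_le (R : realDomainType) (x y : R) n : 0 <= x -> x <= y -> x ^+ n <= y ^+ n.
Proof. move=> x0 xy; apply: lerXn2r; by rewrite ?nnegrE // (le_trans x0 xy). Qed.
Lemma pow_lt (R : realDomainType) (x y : R) n : (0 < n)%N -> 0 <= x -> x < y -> x ^+ n < y ^+ n.
Proof. move=> n0 x0 xy; rewrite ltr_pXn2r // nnegrE //; exact: ltW (le_lt_trans x0 xy). Qed.

Lemma pK_neq0 p (R : realType) (K : closedFieldType) (abs : K -> R) (H : is_Cp p abs) :
  (0 < p)%N -> (p%:R : K) != 0.
Proof.
move=> p0; apply/negP => /eqP e; have := Cp_absp H; rewrite e (ab0 H) => /esym/eqP.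
by rewrite invr_eq0 pnatr_eq0; move: p0; rewrite lt0n => /negPf ->.
Qed.

Lemma ab_inv p (R : realType) (K : closedFieldType) (abs : K -> R) (H : is_Cp p abs) (x : K) :
  x != 0 -> abs (x^-1) = (abs x)^-1.
Proof.
move=> x0; have : abs (x^-1) * abs x = 1 by rewrite -(Cp_absM H) mulVf ?(ab1 H).
have ax : abs x != 0 by rewrite (Cp_abs_eq0 H).
by move=> e; rewrite -[LHS]mulr1 -(mulfV ax) mulrA e mul1r.
Qed.

Lemma ab_pinv p (R : realType) (K : closedFieldType) (abs : K -> R) (H : is_Cp p abs) :
  (0 < p)%N -> abs ((p%:R : K)^-1) = p%:R.
Proof. by move=> p0; rewrite (ab_inv H) ?(pK_neq0 H) // (Cp_absp H) invrK. Qed.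

Lemma ab_lam p (R : realType) (K : closedFieldType) (abs : K -> R) (H : is_Cp p abs) lam :
  abs (lam - 1) < 1 -> abs lam = 1.
Proof.
move=> h; have -> : lam = 1 + (lam - 1) by ring.
by rewrite (ab_strict H) ?(ab1 H).
Qed.

Lemma ab_lamp p (R : realType) (K : closedFieldType) (abs : K -> R) (H : is_Cp p abs) lam :
  (0 < p)%N -> abs (lam - 1) < 1 -> abs (lam / p%:R) = p%:R.
Proof. by move=> p0 h; rewrite (Cp_absM H) (ab_lam H h) mul1r (ab_pinv H). Qed.

Lemma ab_1lamp p (R : realType) (K : closedFieldType) (abs : K -> R) (H : is_Cp p abs) lam :
  (1 < p)%N -> abs (lam - 1) < 1 -> abs (1 - lam / p%:R) = p%:R.
Proof.
move=> p1 h; have p0 : (0 < p)%N by rewrite ltnW.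
rewrite addrC (ab_strict H) (abN H) (ab_lamp H) // (ab1 H) ltr1n //.
Qed.

Lemma ab_mulrn_dvd p (R : realType) (K : closedFieldType) (abs : K -> R) (H : is_Cp p abs)
  (x : K) n : (p %| n)%N -> abs (x *+ n) <= abs x * (p%:R)^-1.
Proof.
move=> d; have -> : x *+ n = x * ((n %/ p)%:R * p%:R) by rewrite -natrM divnK // mulr_natr.
rewrite (Cp_absM H) (Cp_absM H) (Cp_absp H).
apply: ler_wpM2l; first exact: ab_ge0 H _.
rewrite -[leRHS]mul1r; apply: ler_wpM2r; [by rewrite invr_ge0 ler0n | exact: ab_nat H _].
Qed.

Lemma ab_mulrn p (R : realType) (K : closedFieldType) (abs : K -> R) (H : is_Cp p abs)
  (x : K) n : abs (x *+ n) <= abs x.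
Proof.
rewrite -mulr_natr (Cp_absM H) -[leRHS]mulr1 ler_wpM2l ?(ab_ge0 H) //; exact: ab_nat H _.
Qed.

Lemma powdiff p (R : realType) (K : closedFieldType) (abs : K -> R) (H : is_Cp p abs)
  (r : R) (u v : K) i : abs u <= r -> abs v <= r ->
  abs (v ^+ i.+1 - u ^+ i.+1) <= abs (v - u) * r ^+ i.
Proof.
move=> hu hv; have r0 : 0 <= r by apply: le_trans hu; exact: ab_ge0 H _.
have e0 := ab_ge0 H (v - u).
elim: i => [|i IH]; first by rewrite !expr1 expr0 mulr1.
have -> : v ^+ i.+2 - u ^+ i.+2 = v * (v ^+ i.+1 - u ^+ i.+1) + (v - u) * u ^+ i.+1.
  by rewrite !exprS; ring.
apply: (ab_le H).
  rewrite (Cp_absM H); have h := ler_pM (ab_ge0 H v) (ab_ge0 H _) hv IH.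
  by apply: le_trans h _; rewrite exprS mulrCA.
rewrite (Cp_absM H) (abX H); apply: ler_wpM2l => //.
exact: pow_le (ab_ge0 H u) hu.
Qed.

Lemma cvg_sub p (R : realType) (K : closedFieldType) (abs : K -> R) (H : is_Cp p abs)
  (s t : nat -> K) L M : cvgK abs s L -> cvgK abs t M -> cvgK abs (fun n => s n - t n) (L - M).
Proof.
move=> hs ht e e0; have [N1 h1] := hs e e0; have [N2 h2] := ht e e0.
exists (maxn N1 N2) => n hn.
have -> : s n - t n - (L - M) = (s n - L) + - (t n - M) by ring.
apply: (ab_lt H); first by apply: h1; apply: leq_trans hn; exact: leq_maxl.
by rewrite (abN H); apply: h2; apply: leq_trans hn; exact: leq_maxr.
Qed.

Lemma c_ge0 (R : realType) (K : closedFieldType) (abs : K -> R) p (H : is_Cp p abs)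
  (a : nat -> K) (rhat c : R) : (forall i, abs (a i) * rhat ^+ i <= c) -> 0 <= c.
Proof. move=> hc; have := hc 0%N; rewrite expr0 mulr1; apply: le_trans; exact: ab_ge0 H _. Qed.

Lemma Q_bound (R : realType) (K : closedFieldType) (abs : K -> R) p (H : is_Cp p abs)
  (a : nat -> K) (Qf : K -> K) (rhat c : R)
  (HQ : forall z, abs z <= rhat -> cvgK abs (psum a z) (Qf z))
  (hc : forall i, abs (a i) * rhat ^+ i <= c) z :
  abs z <= rhat -> abs (Qf z) <= c.
Proof.
move=> hz; have hl := @ab_limit _ _ _ _ H _ _ c (HQ z hz); apply: hl => n.
rewrite /psum; apply: (@ab_sum _ _ _ _ H n (fun i => a i * z ^+ i)); first exact: (c_ge0 H hc).
move=> i _; rewrite (Cp_absM H) (abX H); apply: le_trans (hc i).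
apply: ler_wpM2l; first exact: ab_ge0 H _.
exact: pow_le (ab_ge0 H z) hz.
Qed.

Lemma Q_lip (R : realType) (K : closedFieldType) (abs : K -> R) p (H : is_Cp p abs)
  (a : nat -> K) (Qf : K -> K) (rhat c : R) (hr : 1 <= rhat)
  (HQ : forall z, abs z <= rhat -> cvgK abs (psum a z) (Qf z))
  (hc : forall i, abs (a i) * rhat ^+ i <= c) u v :
  abs u <= rhat -> abs v <= rhat -> abs (Qf v - Qf u) <= c * abs (v - u).
Proof.
move=> hu hv; have c0 := c_ge0 H hc; have e0 := ab_ge0 H (v - u).
apply: (ab_limit H (cvg_sub H (HQ v hv) (HQ u hu))) => n.
rewrite /psum -sumrB; apply: (@ab_sum _ _ _ _ H n (fun i => a i * v ^+ i - a i * u ^+ i)); first exact: (mulr_ge0 c0 e0).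
move=> [|i] _; first by rewrite !expr0 subrr (ab0 H) mulr_ge0.
rewrite -mulrBr (Cp_absM H).
have h1 := powdiff H i hu hv.
have A0 := ab_ge0 H (a i.+1).
have h2 := hc i.+1.
have ri : 1 <= rhat ^+ i by rewrite exprn_ege1.
have r0 : 0 <= rhat ^+ i by lra.
have h3 : abs (a i.+1) * rhat ^+ i <= c.
  apply: le_trans h2; rewrite exprS; apply: ler_wpM2l => //.
  rewrite -[leLHS]mul1r; apply: ler_wpM2r => //.
apply: le_trans (ler_wpM2l A0 h1) _.
rewrite mulrCA mulrC; apply: ler_wpM2r => //.
Qed.

Lemma binom_diff (K : comNzRingType) (u d : K) n :
  (u + d) ^+ n - u ^+ n = \sum_(i < n) u ^+ (n - i.+1) * d ^+ i.+1 *+ 'C(n, i.+1).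
Proof.
rewrite exprDn big_ord_recl /= subn0 expr0 mulr1 bin0 mulr1n.
by rewrite addrC addrA [_ + u ^+ n]addrC subrr add0r.
Qed.

Lemma mono_bound (R : realType) (X d C : R) a b : 0 <= X -> 0 <= d ->
  X ^+ (a + b) * d <= C -> d ^+ (a + b).+1 <= C -> X ^+ a * d ^+ b.+1 <= C.
Proof.
move=> X0 d0 h1 h2; case: (lerP X d) => hXd.
  apply: le_trans h2; rewrite -addnS exprD; apply: ler_wpM2r; first exact: exprn_ge0.
  exact: pow_le.
apply: le_trans h1; rewrite exprD -mulrA; apply: ler_wpM2l; first exact: exprn_ge0.
rewrite exprSr; apply: ler_wpM2r => //; exact: pow_le (ltW hXd).
Qed.

Lemma divP (R : realType) (P x B : R) : 0 < P -> P * x <= B -> x <= B / P.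
Proof. by move=> P0 h; rewrite ler_pdivlMr // mulrC. Qed.

Lemma master p (R : realType) (K : closedFieldType) (abs : K -> R) (H : is_Cp p abs)
  (pp : prime p) lam (hl : abs (lam - 1) < 1)
  (a : nat -> K) (Qf : K -> K) (rhat c : R) (hr : 1 <= rhat)
  (HQ : forall z, abs z <= rhat -> cvgK abs (psum a z) (Qf z))
  (hc : forall i, abs (a i) * rhat ^+ i <= c) (u v : K) (B : R) :
  abs u <= 1 -> abs (v - u) <= 1 -> 0 <= B ->
  abs u ^+ p.-1 * abs (v - u) <= B -> p%:R * abs u ^+ p * abs (v - u) <= B ->
  p%:R * abs (v - u) ^+ p <= B -> c * abs (v - u) <= B ->
  abs ((Plam p lam v + Qf v) - (Plam p lam u + Qf u)) <= B.
Proof.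
move=> hu he B0 h1 h2 h3 h4.
set X := abs u in hu h1 h2 *; set e := abs (v - u) in he h1 h2 h3 h4 *.
have p1 := prime_gt1 pp; have p0 : (0 < p)%N by rewrite ltnW.
have P0 : (0 : R) < p%:R by rewrite ltr0n.
have P1 : (1 : R) <= p%:R by rewrite ler1n.
have X0 : 0 <= X by exact: ab_ge0 H _.
have e0 : 0 <= e by exact: ab_ge0 H _.
have hv : abs v <= 1.
  have -> : v = u + (v - u) by ring.
  exact: ab_le H _ _ _ hu he.
have ur : abs u <= rhat by exact: le_trans hu hr.
have vr : abs v <= rhat by exact: le_trans hv hr.
have bd : forall n, v ^+ n - u ^+ n =
    \sum_(i < n) u ^+ (n - i.+1) * (v - u) ^+ i.+1 *+ 'C(n, i.+1).
  by move=> n; rewrite -binom_diff; congr (_ ^+ _ - _); ring.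
have ep : e ^+ p <= B / p%:R by apply: divP => //.
have ep1 : e ^+ p.+1 <= B / p%:R.
  apply: le_trans ep; rewrite exprS -[leRHS]mul1r; apply: ler_wpM2r => //.
  exact: exprn_ge0.
have ab : forall i j, abs (u ^+ i * (v - u) ^+ j) = X ^+ i * e ^+ j.
  by move=> i j; rewrite (Cp_absM H) !(abX H).
have D1 : abs (v ^+ p - u ^+ p) <= B / p%:R.
  rewrite bd; apply: (@ab_sum _ _ _ _ H p (fun i => u ^+ (p - i.+1) * (v - u) ^+ i.+1 *+ 'C(p, i.+1))).
    by rewrite divr_ge0 // ltW.
  move=> i hi; case: (ltnP i.+1 p) => hip.
    have dv : (p %| 'C(p, i.+1))%N by apply: prime_dvd_bin pp _; apply/andP; split.
    apply: le_trans (ab_mulrn_dvd H (u ^+ (p - i.+1) * (v - u) ^+ i.+1) dv) _.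
    rewrite ab ler_pM2r ?invr_gt0 //.
    have ex : (p - i.+1 + i = p.-1)%N by clear -hip; lia.
    apply: mono_bound => //; rewrite ex //.
    apply: le_trans h3; rewrite prednK // -[leLHS]mul1r; apply: ler_wpM2r => //.
    exact: exprn_ge0.
  apply: le_trans (ab_mulrn H _ _) _.
  have -> : i.+1 = p by apply/eqP; rewrite eqn_leq hip hi.
  by rewrite ab subnn expr0 mul1r.
have D2 : abs (v ^+ p.+1 - u ^+ p.+1) <= B / p%:R.
  rewrite bd; apply: (@ab_sum _ _ _ _ H p.+1 (fun i => u ^+ (p.+1 - i.+1) * (v - u) ^+ i.+1 *+ 'C(p.+1, i.+1))).
    by rewrite divr_ge0 // ltW.
  move=> i hi; apply: le_trans (ab_mulrn H _ _) _.
  rewrite ab; have ex : (p.+1 - i.+1 + i = p)%N by clear -hi; lia.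
  apply: mono_bound => //; rewrite ex //.
  by apply: divP => //; rewrite mulrA.
have eq : Plam p lam v + Qf v - (Plam p lam u + Qf u) =
   lam / p%:R * (v ^+ p - u ^+ p) + (1 - lam / p%:R) * (v ^+ p.+1 - u ^+ p.+1) + (Qf v - Qf u).
  by rewrite /Plam; ring.
rewrite eq; apply: (ab_le H); last exact: le_trans (Q_lip H hr HQ hc ur vr) h4.
apply: (ab_le H).
  rewrite (Cp_absM H) (ab_lamp H) //.
  by rewrite -ler_pdivlMl // mulrC.
rewrite (Cp_absM H) (ab_1lamp H) //.
by rewrite -ler_pdivlMl // mulrC.
Qed.

Lemma pow_le_self (R : realType) (x : R) n : 0 <= x -> x <= 1 -> (0 < n)%N -> x ^+ n <= x.
Proof.
move=> x0 x1 n0; rewrite -(prednK n0) exprSr -[leRHS]mul1r ler_wpM2r //.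
exact: exprn_ile1.
Qed.

Lemma step_B1 p (R : realType) (K : closedFieldType) (abs : K -> R) (H : is_Cp p abs)
  (pp : prime p) lam (hl : abs (lam - 1) < 1)
  (a : nat -> K) (Qf : K -> K) (rhat c : R) (hr : 1 <= rhat) (hc1 : c <= 1)
  (HQ : forall z, abs z <= rhat -> cvgK abs (psum a z) (Qf z))
  (hc : forall i, abs (a i) * rhat ^+ i <= c) (u v : K) :
  abs u <= 1 -> abs (v - u) <= 1 ->
  abs ((Plam p lam v + Qf v) - (Plam p lam u + Qf u)) <= p%:R * abs (v - u).
Proof.
move=> hu he; have p1 := prime_gt1 pp; have p0 : (0 < p)%N by rewrite ltnW.
have P1 : (1 : R) <= p%:R by rewrite ler1n.
have X0 := ab_ge0 H u; have e0 := ab_ge0 H (v - u).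
apply: (master H pp hl hr HQ hc) => //.
- by rewrite mulr_ge0 // ler0n.
- apply: ler_wpM2r => //; apply: le_trans P1; exact: exprn_ile1.
- rewrite -mulrA ler_wpM2l ?ler0n // -[leRHS]mul1r ler_wpM2r //; exact: exprn_ile1.
- by rewrite ler_wpM2l ?ler0n // pow_le_self.
- by rewrite ler_wpM2r // (le_trans hc1 P1).
Qed.

Lemma exact_val p (R : realType) (K : closedFieldType) (abs : K -> R) (H : is_Cp p abs)
  (pp : prime p) lam (hl : abs (lam - 1) < 1)
  (a : nat -> K) (Qf : K -> K) (rhat c : R) (hr : 1 <= rhat)
  (HQ : forall z, abs z <= rhat -> cvgK abs (psum a z) (Qf z))
  (hc : forall i, abs (a i) * rhat ^+ i <= c) (u : K) :
  abs u < 1 -> c < p%:R * abs u ^+ p -> abs (Plam p lam u + Qf u) = p%:R * abs u ^+ p.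
Proof.
move=> hu hcx; have p1 := prime_gt1 pp; have p0 : (0 < p)%N by rewrite ltnW.
have P0 : (0 : R) < p%:R by rewrite ltr0n.
have c0 := c_ge0 H hc; have X0 := ab_ge0 H u.
have Xp : 0 < abs u.
  rewrite lt_neqAle X0 andbT; apply/negP => /eqP e.
  by move: hcx; rewrite -e expr0n /= gtn_eqF // mulr0 ltNge c0.
have -> : Plam p lam u + Qf u = lam / p%:R * u ^+ p + ((1 - lam / p%:R) * u ^+ p.+1 + Qf u).
  by rewrite /Plam; ring.
have e1 : abs (lam / p%:R * u ^+ p) = p%:R * abs u ^+ p by rewrite (Cp_absM H) (ab_lamp H) // (abX H).
rewrite (ab_strict H) // e1; apply: (ab_lt H).
  rewrite (Cp_absM H) (ab_1lamp H) // (abX H) ltr_pM2l // exprS -[ltRHS]mul1r ltr_pM2r //.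
  exact: exprn_gt0.
apply: le_lt_trans hcx; apply: (Q_bound H HQ hc); exact: le_trans (ltW hu) hr.
Qed.

Lemma step_B0 p (R : realType) (K : closedFieldType) (abs : K -> R) (H : is_Cp p abs)
  (pp : prime p) lam (hl : abs (lam - 1) < 1)
  (a : nat -> K) (Qf : K -> K) (rhat c : R) (hr : 1 <= rhat) (hcr : c < rho R p)
  (HQ : forall z, abs z <= rhat -> cvgK abs (psum a z) (Qf z))
  (hc : forall i, abs (a i) * rhat ^+ i <= c) (u v : K) :
  abs u < 1 -> abs (v - u) <= Sconst R p ->
  abs ((Plam p lam v + Qf v) - (Plam p lam u + Qf u))
    <= Num.max (abs (Plam p lam u + Qf u)) (rho R p) * abs (v - u).
Proof.
move=> hu he; have p1 := prime_gt1 pp; have p0 : (0 < p)%N by rewrite ltnW.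
have P0 : (0 : R) < p%:R by rewrite ltr0n.
have P1 : (1 : R) <= p%:R by rewrite ler1n.
have X0 := ab_ge0 H u; have e0 := ab_ge0 H (v - u).
have c0 := c_ge0 H hc.
have r0 := rho_gt0 R p1; have r1 := rho_lt1 R p1; have rp := rho_gep R p1.
have S0 := S_gt0 R p1; have S1 := S_lt1 R p1; have Sp := S_pow R p1.
set F := Num.max (abs (Plam p lam u + Qf u)) (rho R p).
have rF : rho R p <= F by rewrite le_max lexx orbT.
have gF : abs (Plam p lam u + Qf u) <= F by rewrite le_max lexx.
have F0 : 0 <= F by apply: le_trans rF; exact: ltW.
have hPX : p%:R * abs u ^+ p <= F.
  case: (ltP c (p%:R * abs u ^+ p)) => h.
    by rewrite -(exact_val H pp hl hr HQ hc) //.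
  by apply: le_trans rF; apply: le_trans h _; exact: ltW.
apply: (master H pp hl hr HQ hc) => //.
- exact: ltW.
- exact: le_trans he (ltW S1).
- exact: mulr_ge0.
- apply: ler_wpM2r => //.
  case: (lerP 1 (p%:R * abs u)) => h.
    apply: le_trans hPX; have -> : abs u ^+ p = abs u * abs u ^+ p.-1 by rewrite -exprS prednK.
    rewrite mulrA -[leLHS]mul1r.
    apply: ler_wpM2r => //; exact: exprn_ge0.
  apply: le_trans rF; apply: le_trans rp.
  have hu' : abs u <= (p%:R)^-1 by rewrite -(ler_pM2l P0) mulfV ?gt_eqF // ltW.
  apply: le_trans (pow_le _ X0 hu') _.
  apply: pow_le_self; [by rewrite invr_ge0 ltW | by rewrite invf_le1 | by rewrite -ltnS prednK].
- exact: (ler_wpM2r e0 hPX).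
- have -> : abs (v - u) ^+ p = abs (v - u) ^+ p.-1 * abs (v - u) by rewrite -exprSr prednK.
  rewrite mulrA; apply: ler_wpM2r => //.
  apply: le_trans rF.
  have : abs (v - u) ^+ p.-1 <= Sconst R p ^+ p.-1 by exact: pow_le.
  rewrite Sp => h; rewrite -(ler_pM2l P0) in h; apply: le_trans h _.
  by rewrite mulrC -mulrA mulVf ?mulr1 // gt_eqF.
- apply: ler_wpM2r => //; apply: le_trans rF; exact: ltW.
Qed.

Lemma iter_shift (K : fieldType) p lam h (Qf : K -> K) n z :
  iter n.+1 (Qlam p lam h Qf) z + h - 1 =
  Plam p lam (iter n (Qlam p lam h Qf) z + h - 1) + Qf (iter n (Qlam p lam h Qf) z + h - 1).
Proof. by rewrite iterS /Qlam; ring. Qed.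

Lemma bs_S m M i : block_start m M i.+1 = (block_start m M i + m i + M i)%N.
Proof. by rewrite /block_start big_ord_recr /= addnA. Qed.

Lemma bs_ge m M i : (forall j, (0 < m j)%N) -> (i <= block_start m M i)%N.
Proof.
move=> Hm; elim: i => [|i IH]; first by [].
rewrite bs_S; have := Hm i; clear -IH; lia.
Qed.

Lemma bs_cover m M n : (forall j, (0 < m j)%N) ->
  exists i, (block_start m M i <= n < block_start m M i.+1)%N.
Proof.
move=> Hm; elim: n => [|n [i /andP [h1 h2]]].
  exists 0%N; rewrite bs_S /block_start big_ord0 /=; have := Hm 0%N; clear; lia.
case: (ltnP n.+1 (block_start m M i.+1)) => h3.
  by exists i; rewrite h3 andbT; clear -h1; lia.
exists i.+1; rewrite h3 /= bs_S; have := Hm i.+1; clear -h2 h3; lia.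
Qed.

Lemma prod_rho (R : realType) p a b : (1 < p)%N ->
  0 <= \prod_(a <= j < b) rho_seq R p j /\ \prod_(a <= j < b) rho_seq R p j <= 1.
Proof.
move=> p1; split.
  apply: prodr_ge0 => j _; have [h1 _] := @rhos_prop R p j p1.
  exact: ltW (lt_trans (rho_gt0 R p1) h1).
apply: prodr_ile1 => j _; have [h1 h2] := @rhos_prop R p j p1.
by rewrite h2 andbT ltW // (lt_trans (rho_gt0 R p1) h1).
Qed.

Lemma block_step p (R : realType) (K : closedFieldType) (abs : K -> R) (H : is_Cp p abs)
  (pp : prime p) lam (hl : abs (lam - 1) < 1)
  (a : nat -> K) (Qf : K -> K) (rhat c : R) (hr : 1 <= rhat) (hcr : c < rho R p)
  (HQ : forall z, abs z <= rhat -> cvgK abs (psum a z) (Qf z))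
  (hc : forall i, abs (a i) * rhat ^+ i <= c) (h : K) (hh : abs (h - 1) < 1)
  (m M : nat -> nat) (Hm : forall i, (0 < m i)%N) (HM : forall i, (0 < M i)%N)
  (Hprod : forall i, (\prod_(1 <= j < m i) rho_seq R p j) * (p%:R) ^+ (M i) <= 1)
  (z0 : K) (Hitin : has_block_itinerary abs (Qlam p lam h Qf) m M z0) (z : K) (i : nat) :
  abs (iter (block_start m M i) (Qlam p lam h Qf) z - iter (block_start m M i) (Qlam p lam h Qf) z0)
    <= Sconst R p ->
  forall k, (k <= m i + M i)%N ->
  abs (iter (block_start m M i + k) (Qlam p lam h Qf) z
       - iter (block_start m M i + k) (Qlam p lam h Qf) z0) <= Sconst R p.
Proof.
move=> h0.
have [HB0 HB1] := Hitin i.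
move: h0 HB0 HB1 (Hprod i) (Hm i) (HM i).
set t0 := block_start m M i; set mi := m i; set Mi := M i; set f := Qlam p lam h Qf.
move=> h0 HB0 HB1 Hpr Hmi HMi.
pose g := fun u => Plam p lam u + Qf u.
pose zeta n := iter n f z0 + h - 1. pose xi n := iter n f z + h - 1.
have gz : forall n, zeta n.+1 = g (zeta n) by move=> n; exact: iter_shift.
have gx : forall n, xi n.+1 = g (xi n) by move=> n; exact: iter_shift.
have dz : forall n, xi n - zeta n = iter n f z - iter n f z0 by move=> n; rewrite /xi /zeta; ring.
have dstep : forall n, iter n.+1 f z - iter n.+1 f z0 = g (xi n) - g (zeta n).
  by move=> n; rewrite -gz -gx dz.
have p1 := prime_gt1 pp; have p0 : (0 < p)%N by rewrite ltnW.
have P0 : (0 : R) < p%:R by rewrite ltr0n.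
have P1 : (1 : R) <= p%:R by rewrite ler1n.
have r0 := rho_gt0 R p1; have r1 := rho_lt1 R p1.
have S0 := S_gt0 R p1; have S1 := S_lt1 R p1.
have hc1 : c <= 1 by apply: ltW; exact: lt_trans hcr r1.
have zin0 : forall n, abs (iter n f z0) < 1 -> abs (zeta n) < 1.
  move=> n hn; rewrite /zeta -addrA; exact: ab_lt H _ _ _ hn hh.
have zin1 : forall n, abs (iter n f z0 - 1) < 1 -> abs (zeta n) <= 1.
  move=> n hn; have -> : zeta n = 1 + ((iter n f z0 - 1) + (h - 1)) by rewrite /zeta; ring.
  apply: (ab_le H); first by rewrite (ab1 H).
  by apply: ltW; apply: ab_lt H _ _ _ hn hh.
have Z : forall l, (l <= mi)%N -> abs (zeta (t0 + (mi - l))%N) <= rho_seq R p l.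
  elim=> [|l IH] hlm.
    rewrite subn0 /=; apply: zin1; have := HB1 0%N HMi; by rewrite addn0.
  have IH' := IH (ltnW hlm).
  have hb := HB0 (mi - l.+1)%N (ltac:(clear -hlm; lia)).
  have hz := zin0 _ hb.
  have ht : (t0 + (mi - l.+1)).+1 = (t0 + (mi - l))%N by clear -hlm; lia.
  rewrite leNgt; apply/negP => hgt.
  have [hr1 _] := @rhos_prop R p l p1.
  have [hr2 _] := @rhos_prop R p l.+1 p1.
  have e := rhos_pow p1 (ltW (lt_trans r0 hr1)).
  have hx : rho_seq R p l < p%:R * abs (zeta (t0 + (mi - l.+1))%N) ^+ p.
    have -> : rho_seq R p l = p%:R * rho_seq R p l.+1 ^+ p by rewrite e mulrC mulfVK // gt_eqF.
    rewrite ltr_pM2l //; apply: pow_lt => //; exact: ltW (lt_trans r0 hr2).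
  have hcx : c < p%:R * abs (zeta (t0 + (mi - l.+1))%N) ^+ p.
    exact: lt_trans (lt_trans hcr hr1) hx.
  have := exact_val H pp hl hr HQ hc hz hcx.
  rewrite -/(g _) -gz ht => ev.
  by move: IH'; rewrite ev leNgt hx.
pose Pi k := \prod_(mi - k <= j < mi) rho_seq R p j.
have Pib : forall k, 0 <= Pi k /\ Pi k <= 1 by move=> k; exact: prod_rho.
have B0 : forall k, (k <= mi)%N -> abs (iter (t0 + k) f z - iter (t0 + k) f z0) <= Sconst R p * Pi k.
  elim=> [|k IH] hk.
    by rewrite addn0 /Pi subn0 big_geq // mulr1.
  have IH' := IH (ltnW hk).
  have hz := zin0 _ (HB0 k hk).
  have [Pk0 Pk1] := Pib k.
  have hd : abs (xi (t0 + k)%N - zeta (t0 + k)%N) <= Sconst R p.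
    rewrite dz; apply: le_trans IH' _; rewrite -[leRHS]mulr1; apply: ler_wpM2l => //; exact: ltW.
  have st := step_B0 H pp hl hr hcr HQ hc hz hd.
  rewrite addnS dstep; apply: le_trans st _.
  have hZ := Z (mi - k.+1)%N (leq_subr _ _).
  have e1 : (t0 + (mi - (mi - k.+1)))%N = (t0 + k).+1 by clear -hk; lia.
  rewrite e1 gz in hZ.
  have [hr1 _] := @rhos_prop R p (mi - k.+1)%N p1.
  have hmax : Num.max (abs (g (zeta (t0 + k)%N))) (rho R p) <= rho_seq R p (mi - k.+1)%N.
    by rewrite ge_max hZ ltW.
  have ePi : Pi k.+1 = rho_seq R p (mi - k.+1)%N * Pi k.
    rewrite /Pi big_ltn; last by clear -hk; lia.
    by have -> : (mi - k.+1).+1 = (mi - k)%N by clear -hk; lia.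
  rewrite ePi mulrCA; apply: ler_pM => //.
  - by rewrite le_max (ltW r0) orbT.
  - exact: ab_ge0 H _.
  - by rewrite dz.
pose Pm := \prod_(1 <= j < mi) rho_seq R p j.
have ePm : Pi mi = Pm by rewrite /Pi subnn big_ltn //= mul1r.
have [Pm0 Pm1] : 0 <= Pm /\ Pm <= 1 by exact: prod_rho.
have B1 : forall k, (k <= Mi)%N ->
    abs (iter (t0 + mi + k) f z - iter (t0 + mi + k) f z0) <= Sconst R p * Pm * p%:R ^+ k.
  elim=> [|k IH] hk.
    by rewrite !addn0 expr0 mulr1 -ePm; apply: B0.
  have IH' := IH (ltnW hk).
  have hz := zin1 _ (HB1 k hk).
  have hd : abs (xi (t0 + mi + k)%N - zeta (t0 + mi + k)%N) <= 1.
    rewrite dz; apply: le_trans IH' _; apply: le_trans (ltW S1).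
    rewrite -mulrA -[leRHS]mulr1; apply: ler_wpM2l; first exact: ltW.
    apply: le_trans Hpr; apply: ler_wpM2l => //; apply: ler_weXn2l => //; exact: ltnW.
  have st := step_B1 H pp hl hr hc1 HQ hc hz hd.
  rewrite addnS dstep; apply: le_trans st _.
  rewrite dz exprS mulrCA; apply: ler_wpM2l => //; exact: ltW.
move=> k hk; case: (leqP k mi) => hkm.
  apply: le_trans (B0 k hkm) _; have [_ h1] := Pib k.
  rewrite -[leRHS]mulr1; apply: ler_wpM2l => //; exact: ltW.
have -> : (t0 + k)%N = (t0 + mi + (k - mi))%N by clear -hkm; lia.
have hk' : (k - mi <= Mi)%N by clear -hk; lia.
apply: le_trans (B1 _ hk') _.
rewrite -mulrA -[leRHS]mulr1; apply: ler_wpM2l; first exact: ltW.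
apply: le_trans Hpr; apply: ler_wpM2l => //; apply: ler_weXn2l => //.
Qed.

Lemma no_period p (R : realType) (K : closedFieldType) (abs : K -> R) (H : is_Cp p abs)
  (f : K -> K) (m M : nat -> nat) (Hm : forall i, (0 < m i)%N)
  (Hunb : forall N : nat, exists i0 : nat, forall i, (i0 <= i)%N -> (N <= M i)%N)
  (z0 : K) (Hitin : has_block_itinerary abs f m M z0) (d n0 : nat) :
  (0 < d)%N -> (forall t, (n0 <= t)%N -> abs (iter t f z0 - iter (t + d) f z0) < 1) -> False.
Proof.
move=> d0 hyp; have [i0 hi0] := Hunb d.
set i := maxn i0 n0.+1.
have hMi : (d <= M i)%N by apply: hi0; exact: leq_maxl.
have hbs : (n0.+1 <= block_start m M i)%N.
  apply: leq_trans (bs_ge M i Hm); exact: leq_maxr.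
have [HB0 HB1] := Hitin i.
have hmi := Hm i.
have a := HB0 (m i - 1)%N (ltac:(clear -hmi; lia)).
have b := HB1 (d - 1)%N (ltac:(clear -hMi d0; lia)).
have e : (block_start m M i + m i + (d - 1) = block_start m M i + (m i - 1) + d)%N.
  by clear -hmi d0; lia.
rewrite e in b.
have h := hyp (block_start m M i + (m i - 1))%N (ltac:(clear -hbs; lia)).
set x := iter (block_start m M i + (m i - 1)) f z0 in a h.
set y := iter (block_start m M i + (m i - 1) + d) f z0 in b h.
have hy : abs y < 1.
  have -> : y = x + - (x - y) by ring.
  by apply: (ab_lt H) => //; rewrite (abN H).
have : abs (1 : K) < 1.
  have -> : (1 : K) = y + - (y - 1) by ring.
  by apply: (ab_lt H) => //; rewrite (abN H).
by rewrite (ab1 H) ltxx.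
Qed.

Unset Implicit Arguments.
Theorem lemma3p10 (p : nat) (R : realType) (K : closedFieldType) (abs : K -> R)
  (p_prime : prime p) (HCp : is_Cp p abs)
  (rhat : R) (Hrhat : exists w : K, w != 0 /\ abs w = rhat) (Hrhat1 : 1 < rhat)
  (a : nat -> K) (Qf : K -> K)
  (HQ : forall z, abs z <= rhat -> cvgK abs (psum a z) (Qf z))
  (HQnorm : exists c : R, c < rho R p /\ forall i, abs (a i) * rhat ^+ i <= c)
  (m M : nat -> nat) (Hm : forall i, (0 < m i)%N) (HM : forall i, (0 < M i)%N)
  (Hprod : forall i, (\prod_(1 <= j < m i) rho_seq R p j) * (p%:R) ^+ (M i) <= 1)
  (lam0 : K) (Hlam0 : abs (lam0 - 1) < 1)
  (h0 : K) (Hh0 : abs (h0 - 1) <= abs (Qf 1) / p%:R)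
  (Hh0fix : Plam p lam0 h0 + Qf h0 = h0)
  (z0 : K) (Hz0 : filledK abs rhat (Qlam p lam0 h0 Qf) z0)
  (Hitin : has_block_itinerary abs (Qlam p lam0 h0 Qf) m M z0) :
  (forall z, abs (z - z0) <= Sconst R p -> filledK abs rhat (Qlam p lam0 h0 Qf) z) /\
  ((forall N : nat, exists i0 : nat, forall i, (i0 <= i)%N -> (N <= M i)%N) ->
     wandering (Qlam p lam0 h0 Qf) (fun z => abs (z - z0) <= Sconst R p) /\
     (forall z, abs (z - z0) <= Sconst R p -> filledK abs rhat (Qlam p lam0 h0 Qf) z) /\
     not_attracted abs rhat (Qlam p lam0 h0 Qf) (fun z => abs (z - z0) <= Sconst R p)).
Proof.
have p1 := prime_gt1 p_prime; have p0 : (0 < p)%N by rewrite ltnW.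
have P0 : (0 : R) < p%:R by rewrite ltr0n.
have P1 : (1 : R) <= p%:R by rewrite ler1n.
have hr : 1 <= rhat := ltW Hrhat1.
have [c [hcr hc]] := HQnorm.
have r0 := rho_gt0 R p1; have r1 := rho_lt1 R p1.
have S0 := S_gt0 R p1; have S1 := S_lt1 R p1.
have hc1 : c <= 1 by apply: ltW; exact: lt_trans hcr r1.
have hh : abs (h0 - 1) < 1.
  apply: le_lt_trans Hh0 _.
  have q1 : abs (Qf 1) <= c by apply: (Q_bound HCp HQ hc); rewrite (ab1 HCp).
  rewrite ltr_pdivrMr // mul1r; apply: le_lt_trans q1 _.
  exact: lt_le_trans (lt_trans hcr r1) P1.
set f := Qlam p lam0 h0 Qf.
set S := Sconst R p.
have key : forall z, abs (z - z0) <= S -> forall n, abs (iter n f z - iter n f z0) <= S.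
  move=> z hz.
  have hbs : forall i, abs (iter (block_start m M i) f z - iter (block_start m M i) f z0) <= S.
    elim=> [|i IH]; first by rewrite /block_start big_ord0.
    have := block_step HCp p_prime Hlam0 hr hcr HQ hc hh Hm HM Hprod Hitin IH (leqnn _).
    by rewrite bs_S -addnA.
  move=> n; have [i /andP [h1 h2]] := bs_cover M n Hm.
  rewrite bs_S in h2.
  have := block_step HCp p_prime Hlam0 hr hcr HQ hc hh Hm HM Hprod Hitin (hbs i)
     (k := (n - block_start m M i)%N) (ltac:(clear -h1 h2; lia)).
  by rewrite subnKC.
have filled : forall z, abs (z - z0) <= S -> filledK abs rhat f z.
  move=> z hz n; have := key z hz n => hk.
  have -> : iter n f z = iter n f z0 + (iter n f z - iter n f z0) by ring.
  apply: (ab_le HCp) (Hz0 n) _; apply: le_trans hk _; apply: le_trans hr; exact: ltW.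
split => //; move=> Hunb; split; last split => //.
  have gen : forall n d x y, abs (x - z0) <= S -> abs (y - z0) <= S -> (0 < d)%N ->
      iter n f x = iter (n + d) f y -> False.
    move=> n1 d x1 y1 hx1 hy1 d0 e1.
    apply: (no_period HCp Hm Hunb Hitin d0 (n0 := n1)) => t ht.
    have et : iter t f x1 = iter (t + d) f y1.
      have -> : t = (t - n1 + n1)%N by clear -ht; lia.
      by rewrite iterD e1 -iterD; congr iter; clear -ht; lia.
    have ha := key x1 hx1 t; have hb := key y1 hy1 (t + d).
    rewrite -et in hb.
    have -> : iter t f z0 - iter (t + d) f z0 =
        (iter t f x1 - iter (t + d) f z0) + - (iter t f x1 - iter t f z0) by ring.
    apply: (ab_lt HCp); first exact: le_lt_trans hb S1.
    by rewrite (abN HCp); exact: le_lt_trans ha S1.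
  move=> n m' [x [y [hx [hy e]]]].
  case: (ltngtP n m') => hnm //.
    exfalso; apply: (gen n (m' - n)%N x y) => //; first by rewrite subn_gt0.
    by rewrite subnKC // ltnW.
  exfalso; apply: (gen m' (n - m')%N y x) => //; first by rewrite subn_gt0.
  by rewrite subnKC // ltnW.
have zb : forall t, abs (iter t f z0 + h0 - 1) <= 1.
  move=> t; have [i /andP [h1 h2]] := bs_cover M t Hm.
  rewrite bs_S in h2; have [HB0 HB1] := Hitin i.
  case: (ltnP (t - block_start m M i) (m i)) => hk.
    have := HB0 _ hk; rewrite subnKC // => hb.
    rewrite -addrA; apply: ltW; exact: ab_lt HCp _ _ _ hb hh.
  have hk2 : (t - block_start m M i - m i < M i)%N by clear -h1 h2 hk; lia.
  have := HB1 _ hk2.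
  have -> : (block_start m M i + m i + (t - block_start m M i - m i) = t)%N by clear -h1 hk; lia.
  move=> hb.
  have -> : iter t f z0 + h0 - 1 = 1 + ((iter t f z0 - 1) + (h0 - 1)) by ring.
  apply: (ab_le HCp); first by rewrite (ab1 HCp).
  by apply: ltW; apply: ab_lt HCp _ _ _ hb hh.
move=> [w [k [cc [s [[k0 _] [s0 [hball [z [hz hzc]]]]]]]]].
have [_ [j [_ hcv]]] := hball z hzc.
set eps : R := ((p%:R : R) ^+ k)^-1.
have Pk0 : (0 : R) < p%:R ^+ k by exact: exprn_gt0.
have epos : 0 < eps by rewrite invr_gt0.
have [N hN] := hcv eps epos.
have hd : forall n, (N <= n)%N -> abs (iter (n * k) f z - iter (n * k + k) f z) < eps.
  move=> n hn; have a1 := hN n hn; have a2 := hN n.+1 (leqW hn).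
  rewrite mulSn addnC in a2.
  have -> : iter (n * k) f z - iter (n * k + k) f z =
     (iter (n * k) f z - iter j f w) + - (iter (n * k + k) f z - iter j f w) by ring.
  by apply: (ab_lt HCp) => //; rewrite (abN HCp).
have ub : forall t, abs (iter t f z + h0 - 1) <= 1.
  move=> t; have -> : iter t f z + h0 - 1 = (iter t f z0 + h0 - 1) + (iter t f z - iter t f z0) by ring.
  apply: (ab_le HCp) (zb t) _; apply: le_trans (key z hz t) _; exact: ltW.
have prop : forall n r, (N <= n)%N -> (r < k)%N ->
    abs (iter (n * k + r) f z - iter (n * k + r + k) f z)
      <= p%:R ^+ r * abs (iter (n * k) f z - iter (n * k + k) f z).
  move=> n; elim=> [|r IH] hn hrk; first by rewrite !addn0 expr0 mul1r.
  have IH' := IH hn (ltnW hrk).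
  have D0 := hd n hn.
  have hle : abs (iter (n * k + r + k) f z + h0 - 1 - (iter (n * k + r) f z + h0 - 1)) <= 1.
    have -> : iter (n * k + r + k) f z + h0 - 1 - (iter (n * k + r) f z + h0 - 1) =
       - (iter (n * k + r) f z - iter (n * k + r + k) f z) by ring.
    rewrite (abN HCp); apply: le_trans IH' _.
    apply: le_trans (ler_wpM2l (exprn_ge0 _ (ltW P0)) (ltW D0)) _.
    rewrite /eps ler_pdivrMr // mul1r; apply: (ler_weXn2l P1); clear -hrk; lia.
  have st := step_B1 HCp p_prime Hlam0 hr hc1 HQ hc (ub _) hle.
  rewrite -!iter_shift in st.
  have -> : (n * k + r.+1 = (n * k + r).+1)%N by rewrite addnS.
  have -> : ((n * k + r).+1 + k = (n * k + r + k).+1)%N by clear; lia.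
  have e2 : forall A B : K, A + h0 - 1 - (B + h0 - 1) = - (B - A) by move=> A B; ring.
  rewrite e2 (abN HCp) in st; apply: le_trans st _.
  rewrite e2 (abN HCp) exprS -mulrA; apply: ler_wpM2l => //; exact: ltW.
apply: (no_period HCp Hm Hunb Hitin k0 (n0 := (N * k)%N)) => t ht.
have ht2 : t = (t %/ k * k + t %% k)%N by exact: divn_eq.
have hn : (N <= t %/ k)%N by rewrite leq_divRL.
have hr' : (t %% k < k)%N by rewrite ltn_pmod.
have h1 := prop _ _ hn hr'; rewrite -ht2 in h1.
have h2 : abs (iter t f z - iter (t + k) f z) < 1.
  apply: le_lt_trans h1 _.
  have hD := hd _ hn; rewrite -(ltr_pM2l (exprn_gt0 (t %% k) P0)) in hD.
  apply: lt_le_trans hD _.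
  rewrite /eps ler_pdivrMr // mul1r; apply: (ler_weXn2l P1); clear -hr'; lia.
have ka := key z hz t; have kb := key z hz (t + k).
have -> : iter t f z0 - iter (t + k) f z0 =
  - (iter t f z - iter t f z0) + ((iter t f z - iter (t + k) f z) + (iter (t + k) f z - iter (t + k) f z0)) by ring.
apply: (ab_lt HCp); first by rewrite (abN HCp); exact: le_lt_trans ka S1.
apply: (ab_lt HCp) => //; exact: le_lt_trans kb S1.
Qed.
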